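(* Let $N\ge 1$ be an integer, let $\Gamma$ be (the image in $\mathrm{PSL}_2(\mathbf{Z})$ of) $\Gamma_0(N)$, and let $c$ be the complex conjugation $c(z)=1/(N\bar z)$ of the upper half-plane. Then $(\Gamma,c)$ is a real Fuchsian group, and for every $\gamma\in\Gamma$ admissible with respect to $c$, the locus $C_\gamma$ contains a cusp if and only if $N$ is a perfect square.
   Context: $\mathfrak{h}$ is the upper half-plane; $\Gamma_0(N)$ is the group of matrices in $\mathrm{SL}_2(\mathbf{Z})$ with lower-left entry divisible by $N$; its cusps are the points of $\mathbf{Q}\mathbf{P}^1$ and $\mathfrak{h}^*=\mathfrak{h}\cup\mathbf{Q}\mathbf{P}^1$. For $\gamma\in\mathrm{PSL}_2(\mathbf{R})$, $\gamma^c=c\gamma c$; here $c=c_0\tau$ with $c_0(x+iy)=-x+iy$ and $\tau=\begin{pmatrix}0&-1/\sqrt N\\ \sqrt N&0\end{pmatrix}$, which normalizes $\Gamma_0(N)$, so $\Gamma^c=\Gamma$. An element $\gamma\in\Gamma$ is admissible if $\gamma^c=\gamma^{-1}$ (equivalently, $\gamma=\begin{pmatrix}a&b\\c'&d\end{pmatrix}$ with $c'=-Nb$). $C_\gamma=\{z\in\mathfrak{h}^*:\gamma z=cz\}$, where $c$ is extended to $\mathbf{R}\mathbf{P}^1$ by the same formula. *)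

(* Defs.v *)
From HB Require Import structures.
From mathcomp Require Import all_boot all_order all_algebra.
From mathcomp Require Import complex reals.
Set Implicit Arguments. Unset Strict Implicit. Unset Printing Implicit Defensive.
Import Order.TTheory GRing.Theory Num.Theory.
Local Open Scope ring_scope.
Local Open Scope complex_scope.

Section Defs.
Variable R : realType.

Definition hpl (z : R[i]) : Prop := 0 < Im z.

Definition mob (a b c d : int) (z : R[i]) : R[i] :=
  (a%:~R * z + b%:~R) / (c%:~R * z + d%:~R).

Definition cconj (N : nat) (z : R[i]) : R[i] := 1 / (N%:R * z^*).

(* RP^1 = R u {oo}, with None = oo *)
Definition mobP (a b c d : int) (p : option R) : option R :=
  match p with
  | None => if c == 0 then None else Some (a%:~R / c%:~R)
  | Some x => if c%:~R * x + d%:~R == 0 then None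
              else Some ((a%:~R * x + b%:~R) / (c%:~R * x + d%:~R))
  end.

Definition cconjP (N : nat) (p : option R) : option R :=
  match p with
  | None => Some 0
  | Some x => if x == 0 then None else Some (1 / (N%:R * x))
  end.

(* the cusps QP^1 embedded in RP^1 *)
Definition cusp_pt (q : option rat) : option R :=
  match q with None => None | Some r => Some (ratr r) end.

Definition inGamma0 (N : nat) (a b c d : int) : Prop :=
  a * d - b * c = 1 /\ (N%:Z %| c)%Z.

(* gamma^c = c gamma c equals gamma^{-1} = [[d,-b],[-c,a]] as maps of h
   (equality in PSL_2(R), which acts faithfully on h) *)
Definition admissible (N : nat) (a b c d : int) : Prop :=
  forall z, hpl z -> cconj N (mob a b c d (cconj N z)) = mob d (- b) (- c) a z.

Definition C_has_cusp (N : nat) (a b c d : int) : Prop :=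
  exists q : option rat, mobP a b c d (cusp_pt q) = cconjP N (cusp_pt q).

Definition real_fuchsian (N : nat) : Prop :=
  (forall z, hpl z -> hpl (cconj N z)) /\
  (forall z, hpl z -> cconj N (cconj N z) = z) /\
  (forall a b c d, inGamma0 N a b c d ->
     exists a' b' c' d', inGamma0 N a' b' c' d' /\
       forall z, hpl z -> cconj N (mob a b c d (cconj N z)) = mob a' b' c' d' z).

End Defs.

(* Main.v *)
Require Import Defs.
From HB Require Import structures.
From mathcomp Require Import all_boot all_order all_algebra.
From mathcomp Require Import complex reals.
From mathcomp Require Import ring lra zify.
Import Order.TTheory GRing.Theory Num.Theory.
Local Open Scope ring_scope.
Local Open Scope complex_scope.
Section S.
Variable R : realType.
Variable N : nat.
Hypothesis N0 : (0 < N)%N.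
Lemma intC (x : int) : (x%:~R : R[i]) = (x%:~R : R) +i* 0.
Proof. by rewrite complexr0 rmorph_int. Qed.
Lemma natC (x : nat) : (x%:R : R[i]) = (x%:R : R) +i* 0.
Proof. by rewrite complexr0 rmorph_nat. Qed.
Lemma invcE (x y : R) : (x +i* y)^-1 = (x / (x^+2 + y^+2)) -i* (y / (x^+2+y^+2)).
Proof. by []. Qed.
Lemma NC0 : (N%:R : R[i]) != 0.
Proof. by rewrite pnatr_eq0 -lt0n. Qed.
Lemma NR0 : (N%:R : R) != 0.
Proof. by rewrite pnatr_eq0 -lt0n. Qed.
Lemma cconj_div (p q : R[i]) : cconj N (p / q) = q^* / (N%:R * p^*).
Proof. by rewrite /cconj fmorph_div mul1r mulrA invf_div. Qed.
Lemma conj_cconj (z : R[i]) : (cconj N z)^* = 1 / (N%:R * z).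
Proof. by rewrite /cconj fmorph_div rmorph1 rmorphM rmorph_nat /= conjcK. Qed.
Lemma conj_int (x : int) : conjc (x%:~R : R[i]) = x%:~R.
Proof. by rewrite rmorph_int. Qed.
Lemma hplE (z : R[i]) : hpl z <-> 0 < complex.Im z.
Proof. rewrite /hpl -complexIm. by rewrite -[0 : R[i]]/((0:R)%:C) ltcR. Qed.
Lemma hpl_neq0 (z : R[i]) : hpl z -> z != 0.
Proof. case: z => x y; rewrite hplE /= => h; apply/eqP => -[_ e]; by move: h; rewrite e ltxx. Qed.
Lemma key (a b k d : int) (z : R[i]) : z != 0 ->
  cconj N (mob a b (k * N%:Z) d (cconj N z)) = mob d k (b * N%:Z) a z.
Proof.
move=> z0; rewrite /mob cconj_div.
have cw := conj_cconj z; move: cw; generalize (cconj N z) => w cw.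
rewrite !rmorphD !rmorphM !rmorph_int /= -[Num.conj w]/(conjc w) cw.
have NC := NC0.
have e1 : k%:~R * (N%:Z)%:~R * (1 / (N%:R * z)) + d%:~R = (d%:~R * z + k%:~R) / z :> R[i].
  rewrite ?intrM /= -[(N%:Z)%:~R]/(N%:R : R[i]); field; by rewrite ?z0 ?NC.
have e2 : N%:R * (a%:~R * (1 / (N%:R * z)) + b%:~R) = (b%:~R * (N%:Z)%:~R * z + a%:~R) / z :> R[i].
  rewrite ?intrM /= -[(N%:Z)%:~R]/(N%:R : R[i]); field; by rewrite ?z0 ?NC.
by rewrite e1 e2 invf_div mulrA divfK.
Qed.
Lemma hpl_cconj (z : R[i]) : hpl z -> hpl (cconj N z).
Proof.
case: z => x y; rewrite !hplE /cconj /= => hy.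
rewrite natC; simpc => /=.
have hN : 0 < (N%:R : R) by rewrite ltr0n.
apply: divr_gt0; first by rewrite mulr_gt0.
by rewrite sqrrN ltr_wpDl ?sqr_ge0 // exprn_gt0 // mulr_gt0.
Qed.
Lemma cconjK (z : R[i]) : hpl z -> cconj N (cconj N z) = z.
Proof.
move=> /hpl_neq0 z0; rewrite /cconj fmorph_div rmorph1 rmorphM rmorph_nat /= conjCK.
have NC := NC0. field; by rewrite z0 NC.
Qed.
Lemma cross (X Y U V : R[i]) : Y != 0 -> V != 0 -> X / Y = U / V -> X * V = U * Y.
Proof. move=> hY hV e; rewrite -(divfK hY X) -(divfK hV U) e; ring. Qed.
Lemma lin_nz (p q : int) (t : R) : 0 < t -> (p != 0) || (q != 0) ->
  p%:~R * (0 +i* t) + q%:~R != 0 :> R[i].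
Proof.
move=> ht h; rewrite !intC; simpc; apply/eqP => -[e1 e2].
move: e2 => /eqP; rewrite mulf_eq0 (gt_eqF ht) orbF intr_eq0 => /eqP p0.
move/eqP: e1; rewrite intr_eq0 => /eqP q0.
by move: h; rewrite p0 q0.
Qed.
Lemma adm_k (a b k d : int) : a * d - b * (k * N%:Z) = 1 ->
  admissible R N a b (k * N%:Z) d -> k = - b.
Proof.
move=> det adm.
have step : forall t : R, 0 < t ->
  ((a * (k + b))%:~R : R) + ((d * (k * N%:Z + b * N%:Z))%:~R) * t ^+ 2 = 0.
  move=> t ht.
  have hz : hpl (0 +i* t) by rewrite hplE.
  have := adm _ hz; rewrite key ?hpl_neq0 // /mob => e.
  have nz1 : (b * N%:Z != 0) || (a != 0).
    rewrite -negb_and; apply/negP => /andP[/eqP h1 /eqP h2].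
    by move: det; rewrite h2 mul0r sub0r mulrCA h1 mulr0 oppr0.
  have nz2 : (- (k * N%:Z) != 0) || (a != 0).
    rewrite -negb_and; apply/negP => /andP[/eqP h1 /eqP h2].
    by move/eqP: h1; rewrite oppr_eq0 => /eqP h1; move: det; rewrite h2 h1 mul0r sub0r mulr0 oppr0.
  have := cross _ _ _ _ (lin_nz _ _ _ ht nz1) (lin_nz _ _ _ ht nz2) e.
  rewrite !intC; simpc; case => e1 _.
  move: e1; rewrite !(intrM, intrD, intrN) => e1.
  lra.
have s1 := step 1 ltr01.
have s2 := step 2 (ltr0Sn _ 1).
have h1 : a * (k + b) = 0.
  apply/eqP; rewrite -(intr_eq0 R); apply/eqP. lra.
have h2 : d * (k * N%:Z + b * N%:Z) = 0.
  apply/eqP; rewrite -(intr_eq0 R); apply/eqP. lra.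
clear -h1 h2 det N0.
have [kb|kb] := eqVneq (k + b) 0; first by apply/eqP; rewrite -addr_eq0 kb.
have a0 : a = 0 by move/eqP: h1; rewrite mulf_eq0 (negbTE kb) orbF => /eqP.
have d0 : d = 0.
  move/eqP: h2; rewrite -mulrDl mulf_eq0 mulf_eq0 (negbTE kb) /=.
  case/orP => [/eqP //|/eqP]; lia.
move: det; rewrite a0 d0 mul0r sub0r mulrA => det.
have p1 : b * k = -1 by move: (b * k) det => p det; nia.
exfalso; move/eqP: kb; apply.
have : (`|b| * `|k| = 1)%N by rewrite -abszM p1.
move/eqP; rewrite muln_eq1 => /andP[/eqP hb /eqP hk].
nia.
Qed.

Lemma NrR : (N%:R : R) != 0. Proof. by rewrite pnatr_eq0 -lt0n. Qed.

Lemma cusp_exists (a b d e : int) (m : nat) : N = (m ^ 2)%N -> e * e = 1 -> a != 0 ->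
  - (b * N%:Z) + e * m%:Z != 0 -> a * d - b * (- b * N%:Z) = 1 ->
  C_has_cusp R N a b (- b * N%:Z) d.
Proof.
move=> hN ee a0 u0 det.
set u := - (b * N%:Z) + e * m%:Z.
have NA0 : (N%:Z * a)%:~R != 0 :> R.
  by rewrite intr_eq0 mulf_eq0 negb_or a0 andbT; apply/eqP; lia.
have u0R : (u%:~R : R) != 0 by rewrite intr_eq0.
exists (Some (u%:~R / (N%:Z * a)%:~R)).
rewrite /=.
set y := (u%:~R / (N%:Z * a)%:~R : R).
have -> : ratr (u%:~R / (N%:Z * a)%:~R) = y by rewrite /y fmorph_div !rmorph_int.
have y0 : y != 0 by rewrite mulf_neq0 // invr_eq0.
have Ay : (N%:Z * a)%:~R * y = u%:~R by rewrite /y mulrC divfK.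
have eint : - b * N%:Z * u + N%:Z * a * d = u * e * m%:Z.
  apply/eqP; rewrite -subr_eq0; apply/eqP.
  have -> : - b * N%:Z * u + N%:Z * a * d - u * e * m%:Z
     = N%:Z * (a * d - b * (- b * N%:Z)) - (e * e) * (m%:Z * m%:Z) by rewrite /u; ring.
  rewrite det ee hN; lia.
have D : (- b * N%:Z)%:~R * y + d%:~R = y * e%:~R * (m%:Z)%:~R :> R.
  apply: (mulfI NA0).
  have -> : (N%:Z * a)%:~R * ((- b * N%:Z)%:~R * y + d%:~R)
     = (- b * N%:Z)%:~R * ((N%:Z * a)%:~R * y) + (N%:Z * a)%:~R * d%:~R :> R by ring.
  have -> : (N%:Z * a)%:~R * (y * e%:~R * (m%:Z)%:~R)
     = ((N%:Z * a)%:~R * y) * e%:~R * (m%:Z)%:~R :> R by ring.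
  rewrite Ay -!intrM -intrD; congr (_ %:~R).
  by rewrite -eint.
have e0 : (e%:~R : R) != 0 by rewrite intr_eq0; apply/eqP => e0; move: ee; rewrite e0 mul0r.
have m0 : ((m%:Z)%:~R : R) != 0.
  rewrite intr_eq0; apply/eqP => m0; move: N0; rewrite hN; lia.
rewrite D.
case: ifP => [/eqP h|_].
  by exfalso; move: h; apply/eqP; apply: mulf_neq0 => //; apply: mulf_neq0.
case: ifP => [/eqP h|_]; first by move: y0; rewrite h eqxx.
congr Some.
have Nab : (N%:R : R) * (a%:~R * y + b%:~R) = e%:~R * (m%:Z)%:~R.
  have -> : (N%:R : R) * (a%:~R * y + b%:~R) = (N%:Z * a)%:~R * y + (N%:Z * b)%:~R.
    by rewrite !intrM; ring.
  rewrite Ay -intrD -intrM; congr (_ %:~R); rewrite /u; ring.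
have NR := NrR.
have -> : a%:~R * y + b%:~R = e%:~R * (m%:Z)%:~R / N%:R :> R.
  by rewrite -Nab; field.
by field; rewrite y0 e0 m0 NR.
Qed.
Lemma rat_sq (s : rat) : s ^+ 2 = N%:R -> exists m : nat, N = (m ^ 2)%N.
Proof.
move=> hs.
have eQ : ((numq s) ^+ 2)%:~R = ((N%:Z * (denq s) ^+ 2)%:~R : rat).
  have hq : ((denq s)%:~R : rat) != 0 by rewrite intr_eq0 denq_neq0.
  have e1 : ((numq s)%:~R : rat) = s * (denq s)%:~R.
    by rewrite -{2}(divq_num_den s) divfK.
  by rewrite rmorphXn /= e1 rmorphM /= rmorphXn /= exprMn hs.
have e : (numq s) ^+ 2 = N%:Z * (denq s) ^+ 2 by apply: (intr_inj eQ).
have eN : (`|numq s| ^ 2 = N * `|denq s| ^ 2)%N.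
  by have := congr1 absz e; rewrite abszX abszM abszX.
have cop : coprime `|denq s| (`|numq s| ^ 2).
  by apply: coprimeXr; rewrite coprime_sym coprime_num_den.
have dv : (`|denq s| %| `|numq s| ^ 2)%N by rewrite eN (expnS _ 1) mulnCA dvdn_mulr.
move/gcdn_idPl: dv; move/eqP: cop => -> Q1.
by exists `|numq s|%N; rewrite eN -Q1 muln1.
Qed.
Lemma crossF (F : fieldType) (X Y U V : F) : Y != 0 -> V != 0 -> X / Y = U / V -> X * V = U * Y.
Proof. move=> hY hV e; rewrite -(divfK hY X) -(divfK hV U) e; ring. Qed.

Lemma N1 (b : int) : b * (b * N%:Z) = 1 -> N = 1%N.
Proof.
move=> h; have := congr1 absz h; rewrite !abszM /= => /eqP.
by rewrite !muln_eq1 => /andP[_ /andP[_ /eqP]].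
Qed.

Lemma cusp_sq (a b d : int) : a * d - b * (- b * N%:Z) = 1 ->
  C_has_cusp R N a b (- b * N%:Z) d -> exists m : nat, N = (m ^ 2)%N.
Proof.
move=> det [[r|]] /=; last first.
  case: ifP => // hc [e].
  have a0 : a = 0.
    move/eqP: e; rewrite mulf_eq0 invr_eq0 !intr_eq0 hc orbF => /eqP //.
  exists 1%N; apply: (@N1 b); move: det; rewrite a0 mul0r sub0r mulNr mulrN opprK //.
case: ifP => hA; case: ifP => hB //.
  move=> _; move/eqP: hB => hB; move: hA; rewrite hB mulr0 add0r intr_eq0 => /eqP d0.
  exists 1%N; apply: (@N1 b); move: det; rewrite d0 mulr0 sub0r mulNr mulrN opprK //.
case=> e.
set x := ratr r in hA hB e.
have NR := NrR.
have nx : (N%:R * x) != 0 by rewrite mulf_neq0 // hB.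
have e2 := crossF _ _ _ _ _ (negbT hA) nx e.
have key2 : ((N%:Z * a)%:~R * x + (N%:Z * b)%:~R) ^+ 2 = N%:R :> R.
  apply/eqP; rewrite -subr_eq0; apply/eqP.
  have detR : ((a * d - b * (- b * N%:Z))%:~R : R) = 1 by rewrite det.
  move: e2 detR; rewrite !(intrM, intrD, intrN) => e2 detR.
  have -> : ((N%:Z)%:~R * a%:~R * x + (N%:Z)%:~R * b%:~R) ^+ 2 - N%:R = 
     (N%:Z)%:~R * a%:~R * ((a%:~R * x + b%:~R) * (N%:R * x) - 1 * ((- b%:~R * (N%:Z)%:~R) * x + d%:~R))
     + (N%:Z)%:~R * ((a%:~R * d%:~R - b%:~R * (- b%:~R * (N%:Z)%:~R)) - 1) :> R.
    rewrite -[(N%:Z)%:~R]/(N%:R : R); ring.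
  by rewrite e2 detR !subrr !mulr0 addr0.
have hs : ((N%:Z * a)%:~R * r + (N%:Z * b)%:~R) ^+ 2 = N%:R :> rat.
  apply: (@fmorph_inj _ _ (GRing.RMorphism.clone _ _ (@ratr R) _)).
  by rewrite rmorphXn rmorphD rmorphM !rmorph_int rmorph_nat.
exact: rat_sq hs.
Qed.
Lemma cusp_a0 (b d : int) : 0 * d - b * (- b * N%:Z) = 1 ->
  C_has_cusp R N 0 b (- b * N%:Z) d.
Proof.
move=> det; exists None => /=; case: ifP => [/eqP h|_].
  by move: det; rewrite h mulr0 mul0r subr0.
by rewrite mul0r.
Qed.
End S.

Theorem proposition6p5 (R : realType) (N : nat) :
  (0 < N)%N ->
  real_fuchsian R N /\
  (forall a b c d : int, inGamma0 N a b c d -> admissible R N a b c d ->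
     (C_has_cusp R N a b c d <-> exists m : nat, N = (m ^ 2)%N)).
Proof.
move=> N0; split.
  split; first by move=> z; exact: hpl_cconj.
  split; first by move=> z; exact: cconjK.
  move=> a b c d [det /dvdzP [k ck]].
  exists d, k, (b * N%:Z), a; split.
    split; last by apply: dvdz_mull.
    by rewrite -det ck; ring.
  by move=> z hz; rewrite ck; apply: key => //; apply: hpl_neq0.
move=> a b c d [det /dvdzP [k ck]]; rewrite ck => adm.
rewrite ck in det.
have kb := @adm_k R N N0 _ _ _ _ det adm.
rewrite kb in det adm *.
split; first exact: cusp_sq.
move=> [m hm].
have [a0|a0] := eqVneq a 0.
  by rewrite a0; apply: cusp_a0; rewrite -a0.
have [u0|u0] := eqVneq (- (b * N%:Z) + 1 * m%:Z) 0.
  apply: (@cusp_exists R N N0 a b d (-1) m hm _ a0 _ det) => //.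
  have m0 : (0 < m)%N by move: N0; rewrite hm; case: (m) => //.
  move: u0 m0; clear; lia.
exact: (@cusp_exists R N N0 a b d 1 m hm _ a0 u0 det).
Qed.
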